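(* Let $\psi_\alpha$ be either a Value-at-Risk metric $\mathrm{VaR}_\alpha$ or a distortion risk measure. Let $[Z_i(\tau_i,u_i)]_{i=1}^N$ be per-agent return distributions with quantile functions $\theta_i(\tau_i,u_i,w)$, let $\bar u_i=\arg\max_{u_i}\psi_\alpha[Z_i(\tau_i,u_i)]$ and $\bar{\boldsymbol u}=(\bar u_1,\dots,\bar u_N)$, let $k_1,\dots,k_N\ge0$ be constants not depending on $\boldsymbol u$, let $\theta_r(\boldsymbol\tau,\boldsymbol u,w)\le0$ for all $\boldsymbol u,w$, and let the mask be $m_\alpha(\boldsymbol\tau,\boldsymbol u)=0$ if $\boldsymbol u=\bar{\boldsymbol u}$ and $m_\alpha(\boldsymbol\tau,\boldsymbol u)=1$ otherwise. Let $Z_{jt}(\boldsymbol\tau,\boldsymbol u)$ be a joint return distribution (e.g. represented as a Dirac mixture $\sum_{j=1}^J p_j(\boldsymbol\tau,\boldsymbol u)\delta_{\theta(\boldsymbol\tau,\boldsymbol u,w_j)}$) whose quantile function is $$\theta(\boldsymbol\tau,\boldsymbol u,w)=\sum_{i=1}^N k_i\,\theta_i(\tau_i,u_i,w)+m_\alpha(\boldsymbol\tau,\boldsymbol u)\,\theta_r(\boldsymbol\tau,\boldsymbol u,w),\qquad w\in(0,1].$$ Then $[Z_i]_{i=1}^N$ satisfy the RIGM principle for $Z_{jt}$ with risk metric $\psi_\alpha$, i.e. $\arg\max_{\boldsymbol u}\psi_\alpha[Z_{jt}(\boldsymbol\tau,\boldsymbol u)]=\bar{\boldsymbol u}$.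
   Context: There are $N$ agents; agent $i$ has observation history $\tau_i$ and finite action set $U_i$; $\boldsymbol\tau=(\tau_1,\dots,\tau_N)$, $\boldsymbol u=(u_1,\dots,u_N)$. For a real random variable $Z$ with CDF $F_Z$, its quantile function is $\theta_Z(\omega)=\inf\{z\in\mathbb{R}:\omega\le F_Z(z)\}$, $\omega\in(0,1]$. $\mathrm{VaR}_\alpha(Z)=\theta_Z(\alpha)$. A distortion risk measure with differentiable distortion function $g:[0,1]\to[0,1]$ is $\psi(Z)=\int_0^1 g'(\omega)\theta_Z(\omega)\,d\omega$ (integrals assumed finite; examples CVaR, Wang, CPW). RIGM principle: $\arg\max_{\boldsymbol u}\psi_\alpha[Z_{jt}(\boldsymbol\tau,\boldsymbol u)]=(\arg\max_{u_1}\psi_\alpha[Z_1(\tau_1,u_1)],\dots,\arg\max_{u_N}\psi_\alpha[Z_N(\tau_N,u_N)])$. Standing assumption of the paper: argmax sets are singletons (ties broken by smallest index). *)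

(* Defs.v *)
From HB Require Import structures.
From mathcomp Require Import all_boot all_order all_algebra.
From mathcomp Require Import all_classical all_reals all_analysis.
Set Implicit Arguments. Unset Strict Implicit. Unset Printing Implicit Defensive.
Import Order.TTheory GRing.Theory Num.Theory.
Local Open Scope classical_set_scope.
Local Open Scope ring_scope.

Definition cdf {R : realType} (P : probability R R) (z : R) : R :=
  fine (P `]-oo, z]%classic).

(* Quantile function theta_Z(w) = inf {z | w <= F_Z(z)}, meaningful for w in (0,1]. *)
Definition quantile {R : realType} (P : probability R R) (w : R) : R :=
  inf [set z | w <= cdf P z].

Definition VaR {R : realType} (alpha : R) (P : probability R R) : R :=
  quantile P alpha.

Definition distortion_fun {R : realType} (g : R -> R) : Prop :=
  [/\ g 0 = 0, g 1 = 1,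
      (forall x, x \in `[0, 1] -> 0 <= g x <= 1),
      {in `[0, 1] &, {homo g : x y / x <= y}} &
      (forall x, 0 < x < 1 -> derivable g x 1)].

Definition distortion_risk {R : realType} (g : R -> R) (P : probability R R)
  : \bar R :=
  (\int[lebesgue_measure]_(w in `]0%R, 1%R]%classic) ((derive1 g (w : R) * quantile P w)%:E))%E.

Inductive risk_metric (R : realType) :=
| RM_VaR of R
| RM_distortion of (R -> R).

Definition risk {R : realType} (rm : risk_metric R) (P : probability R R)
  : \bar R :=
  match rm with
  | RM_VaR a => (VaR a P)%:E
  | RM_distortion g => distortion_risk g P
  end.

Definition valid_rm {R : realType} (rm : risk_metric R) : Prop :=
  match rm with
  | RM_VaR a => 0 < a <= 1
  | RM_distortion g => distortion_fun g
  end.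

(* "Integrals assumed finite": the distortion integral is Lebesgue integrable. *)
Definition finite_risk {R : realType} (rm : risk_metric R) (P : probability R R)
  : Prop :=
  match rm with
  | RM_VaR _ => True
  | RM_distortion g =>
      lebesgue_measure.-integrable `]0%R, 1%R]%classic
        (fun w : R => (derive1 g w * quantile P w)%:E)
  end.

Definition is_argmax {T : Type} {R : realType} (f : T -> \bar R) (x : T) : Prop :=
  forall y, (f y <= f x)%E.

Definition rigm_mask {T : eqType} {R : realType} (ubar u : T) : R :=
  if u == ubar then 0 else 1.

(* Main.v *)
Require Import Defs.
From HB Require Import structures.
From mathcomp Require Import all_boot all_order all_algebra.
From mathcomp Require Import all_classical all_reals all_analysis.
Import Order.TTheory GRing.Theory Num.Theory.
Local Open Scope classical_set_scope.
Local Open Scope ring_scope.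

Import numFieldNormedType.Exports.

Lemma ndecr_derive1_ge0 {R : realType} (f : R -> R) (D : set R) (x : R) :
  {in D° : set R, forall x, derivable f x 1%R} ->
  {in D &, {homo f : x y / x <= y}} ->
  D° x -> 0 <= derive1 f x.
Proof.
move=> df incrf Dx.
apply: limr_ge.
  under eq_fun; first (move=> h; rewrite -{2}(scaler1 h); over).
  by apply: df; rewrite inE.
have [e /= e0 Hball] := open_subball (open_interior D) Dx.
near=> h.
have h0 : h != 0%R by near: h; exact: nbhs_dnbhs_neq.
have Dhx : D° (h + x).
  apply: (Hball (`|2 * h|%R)) => //.
  - rewrite /= sub0r normrN normr_id normrM ger0_norm// -ltr_pdivlMl//.
      by near: h; apply: dnbhs0_lt; exact: mulr_gt0.
    by rewrite normrM ger0_norm// mulr_gt0// normr_gt0.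
  apply: ball_sym; rewrite /ball/= addrK.
  by rewrite normrM (@ger0_norm _ 2)// ltr_pMl ?normr_gt0// ltr1n.
move: h0; rewrite neq_lt => /orP[h0|h0].
- rewrite nmulr_rge0 ?invr_lt0// subr_le0.
  by apply: incrf; rewrite ?gerDr ?ltW// inE; exact: interior_subset.
- rewrite pmulr_rge0 ?invr_gt0// subr_ge0.
  by apply: incrf; rewrite ?lerDr ?ltW// inE; exact: interior_subset.
Unshelve. end_near. Qed.

Lemma g'_ge0 {R : realType} (g : R -> R) (w : R) :
  distortion_fun g -> 0 < w < 1 -> 0 <= derive1 g w.
Proof.
move=> [_ _ _ hom der] w01.
apply: (@ndecr_derive1_ge0 _ g `[0, 1]%classic).
- rewrite interior_itv => y; rewrite inE /= in_itv /= => y01; exact: der.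
- move=> a b; rewrite !inE /= => ha hb; exact: hom.
- by rewrite interior_itv /= in_itv /=.
Qed.

Theorem theorem6 (R : realType) (N : nat) (U : 'I_N -> finType)
  (Tau : 'I_N -> Type) (tau : forall i : 'I_N, Tau i)
  (rm : risk_metric R)
  (Z : forall i : 'I_N, Tau i -> U i -> probability R R)
  (Zjt : (forall i : 'I_N, Tau i) -> {dffun forall i : 'I_N, U i} -> probability R R)
  (ubar : {dffun forall i : 'I_N, U i})
  (k : 'I_N -> R)
  (theta_r : {dffun forall i : 'I_N, U i} -> R -> R) :
  valid_rm rm ->
  (forall (i : 'I_N) (ui : U i), finite_risk rm (Z i (tau i) ui)) ->
  (forall u, finite_risk rm (Zjt tau u)) ->
  (forall i : 'I_N, is_argmax (fun ui : U i => risk rm (Z i (tau i) ui)) (ubar i)) ->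
  (forall i : 'I_N, 0 <= k i) ->
  (forall u w, theta_r u w <= 0) ->
  (forall u w, 0 < w <= 1 ->
     quantile (Zjt tau u) w =
       \sum_(i < N) k i * quantile (Z i (tau i) (u i)) w
       + rigm_mask ubar u * theta_r u w) ->
  is_argmax (fun u => risk rm (Zjt tau u)) ubar /\
  ((forall u1 u2, is_argmax (fun u => risk rm (Zjt tau u)) u1 ->
                  is_argmax (fun u => risk rm (Zjt tau u)) u2 -> u1 = u2) ->
   forall u, is_argmax (fun u => risk rm (Zjt tau u)) u <-> u = ubar).
Proof.
move=> vrm fZ fJ amax k0 thr0 hq.
have mask0 : rigm_mask ubar ubar = 0 :> R by rewrite /rigm_mask eqxx.
have maskr u w : rigm_mask ubar u * theta_r u w <= 0 :> R.
  rewrite /rigm_mask; case: ifP => _; first by rewrite mul0r.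
  by rewrite mul1r.
have part1 : is_argmax (fun u => risk rm (Zjt tau u)) ubar.
  move=> u; case: rm vrm fZ fJ amax => [a|g] /= vrm fZ fJ amax.
  - rewrite /VaR lee_fin hq // hq // mask0 mul0r addr0.
    apply: ler_wnDr; first exact: maskr.
    apply: ler_sum => i _; apply: ler_wpM2l => //.
    by have := amax i (u i); rewrite /= /VaR lee_fin.
  - rewrite /distortion_risk.
    set D := `]0%R, 1%R]%classic.
    have mD : measurable (D : set (measurableTypeR R)) by exact: measurable_itv.
    set F := fun i (ui : U i) w => (derive1 g w * quantile (Z i (tau i) ui) w)%:E.
    have iF i ui : lebesgue_measure.-integrable D (F i ui) by exact: fZ.
    set S := fun (v : {dffun forall i : 'I_N, U i}) w =>
      (\sum_(i < N) (k i)%:E * F i (v i) w)%E.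
    have iS v : lebesgue_measure.-integrable D (S v).
      by apply: (integrable_sum mD) => i _; apply: (integrableZl mD).
    have intS v : (\int[lebesgue_measure]_(w in D) S v w =
        \sum_(i < N) (k i)%:E * \int[lebesgue_measure]_(w in D) F i (v i) w)%E.
      rewrite /S (integral_sum mD); last by move=> i; apply: (integrableZl mD).
      by apply: eq_bigr => i _; rewrite (integralZl mD).
    have eqJ v w : D w -> (derive1 g w * quantile (Zjt tau v) w)%:E =
        S v w + (derive1 g w * (rigm_mask ubar v * theta_r v w))%:E.
      move=> Dw; rewrite hq; last by move: Dw; rewrite /D /= in_itv /=.
      rewrite /S /F mulrDr EFinD; congr (_ + _)%E.
      rewrite mulr_sumr -sumEFin; apply: eq_bigr => i _.
      by rewrite -EFinM mulrCA.
    apply: (@le_trans _ _ (\int[lebesgue_measure]_(w in D) S u w)%E).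
      have sub : D `\ 1%R `<=` D by move=> x [].
      have mD1 : measurable (D `\ 1%R : set (measurableTypeR R)).
        by apply: measurableD => //.
      rewrite -(@integral_setD1 R _ 1%R D mD1); last first.
        apply: (measurable_funS mD sub); exact: (measurable_int _ (fJ u)).
      rewrite -(@integral_setD1 R (S u) 1%R D mD1); last first.
        apply: (measurable_funS mD sub); exact: (measurable_int _ (iS u)).
      apply: le_integral => //.
      + exact: integrableS (fJ u).
      + exact: integrableS (iS u).
      + move=> w; rewrite inE => -[Dw w1].
        rewrite eqJ //; apply: geeDl; rewrite lee_fin.
        apply: mulr_ge0_le0; last exact: maskr.
        apply: g'_ge0 => //.
        move: Dw; rewrite /D /= in_itv /= => /andP[-> ]; rewrite le_eqVlt.
        by case/orP => // /eqP wE; exfalso; apply: w1; rewrite wE.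
    rewrite intS.
    apply: (@le_trans _ _ (\sum_(i < N) (k i)%:E *
        \int[lebesgue_measure]_(w in D) F i (ubar i) w)%E).
      apply: lee_sum => i _; apply: lee_wpmul2l; first by rewrite lee_fin.
      exact: amax i (u i).
    rewrite -intS le_eqVlt; apply/orP; left; apply/eqP.
    apply: eq_integral => w; rewrite inE => Dw.
    by rewrite eqJ // mask0 mul0r mulr0 adde0.
split => // uniq u; split; first by move=> au; exact: uniq au part1.
by move=> ->.
Qed.
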